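(* (Local triangle inequality.) Fix an integer $N\ge1$. Let $\Gamma=(V,E)$ be a finite graph and $\phi:V\to\mathbb{C}$ a solution of equation (1) with $\gamma:V\to\mathbb{R}$. Let $x,y,z\in V$ be pairwise adjacent with $\gamma(x),\gamma(y),\gamma(z)<1$. Then $\ell(\overline{xy})+\ell(\overline{xz})\ge\ell(\overline{yz})$, and the inequality is strict if $\phi$ is not constant on $\{x\}\cup\{w:w\sim x\}$.
   Context: Equation (1) at $x$ of degree $n(x)$: $\frac{\gamma(x)}{n(x)}\big(\sum_{w\sim x}(\phi(w)-\phi(x))\big)^2=\sum_{w\sim x}(\phi(x)-\phi(w))^2$. For $x\in V$ put $\rho(x)=\frac12\Big\{\sum_{w\sim x}|\phi(w)-\phi(x)|^2-\frac{\gamma(x)}{n(x)}\Big|\sum_{w\sim x}(\phi(w)-\phi(x))\Big|^2\Big\}$. If $\gamma(x)<1$, the median edge length at $x$ (relative to $\phi$, in dimension $N$) is $r(x)\ge0$ with $r(x)^2=\frac{N+(1-N)\gamma(x)}{n(x)(1-\gamma(x))}\rho(x)$. For an edge $\overline{xy}$ with $\gamma(x),\gamma(y)<1$, its length is $\ell(\overline{xy})=\frac{r(x)+r(y)}{2}$. *)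

(* Defs.v *)
(* The complex numbers are modelled by an arbitrary
   numClosedFieldType C (e.g. algC); real values are elements x with
   x \is Num.real, and |z| is the norm `|z|. *)
From HB Require Import structures.
From mathcomp Require Import all_boot all_order all_algebra all_field.
Set Implicit Arguments. Unset Strict Implicit. Unset Printing Implicit Defensive.
Import Order.TTheory GRing.Theory Num.Theory.
Local Open Scope ring_scope.

Section Defs.
Variables (C : numClosedFieldType) (V : finType) (adj : rel V).

Definition simple_graph : Prop :=
  symmetric adj /\ irreflexive adj.

Definition deg (x : V) : nat := #|[set w | adj x w]|.

Definition eq1_at (phi : V -> C) (gamma : V -> C) (x : V) : Prop :=
  gamma x / (deg x)%:R * (\sum_(w | adj x w) (phi w - phi x)) ^+ 2
  = \sum_(w | adj x w) (phi x - phi w) ^+ 2.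

Definition rho (phi : V -> C) (gamma : V -> C) (x : V) : C :=
  2^-1 * (\sum_(w | adj x w) `|phi w - phi x| ^+ 2
          - gamma x / (deg x)%:R * `|\sum_(w | adj x w) (phi w - phi x)| ^+ 2).

Definition median_len (N : nat) (phi : V -> C) (gamma : V -> C) (x : V) : C :=
  sqrtC ((N%:R + (1 - N%:R) * gamma x) / ((deg x)%:R * (1 - gamma x))
         * rho phi gamma x).

Definition edge_len (N : nat) (phi : V -> C) (gamma : V -> C) (x y : V) : C :=
  (median_len N phi gamma x + median_len N phi gamma y) / 2.

End Defs.

(* Main.v *)
Require Import Defs.
From HB Require Import structures.
From mathcomp Require Import all_boot all_order all_algebra all_field.
From mathcomp Require Import ring.
Import Order.TTheory GRing.Theory Num.Theory.
Local Open Scope ring_scope.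

Lemma cs_real (R : numFieldType) (I : finType) (A : pred I) (b : I -> R) :
  (forall i, b i \is Num.real) ->
  (\sum_(i in A) b i) ^+ 2 <= #|A|%:R * \sum_(i in A) b i ^+ 2.
Proof.
move=> br.
have [n0|npos] := eqVneq #|A| 0%N.
  have -> : \sum_(i in A) b i = 0.
    by apply: big1 => i iA; move: (card0_eq n0 i); rewrite iA.
  by rewrite n0 mul0r expr0n.
set s := \sum_(i in A) b i; set q := \sum_(i in A) b i ^+ 2.
set m := s / #|A|%:R.
have sr : s \is Num.real by apply: rpred_sum.
have mr : m \is Num.real by rewrite rpredM ?rpredV ?realn.
have H : 0 <= \sum_(i in A) (b i - m) ^+ 2.
  by apply: sumr_ge0 => i _; rewrite -realEsqr rpredB.
have E : \sum_(i in A) (b i - m) ^+ 2 = q - (m *+ 2) * s + m ^+ 2 *+ #|A|.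
  rewrite -sumr_const /q /s mulr_sumr -sumrB -big_split /=.
  by apply: eq_bigr => i _; ring.
have nR : (#|A|%:R : R) != 0 by rewrite pnatr_eq0.
have nP : (0 : R) < #|A|%:R by rewrite ltr0n lt0n.
rewrite -subr_ge0.
have -> : #|A|%:R * q - s ^+ 2 = #|A|%:R * (q - (m *+ 2) * s + m ^+ 2 *+ #|A|).
  rewrite /m -mulr_natr; field; done.
by rewrite -E mulr_ge0 // ltW.
Qed.

Lemma key (R : numFieldType) (n T U g : R) :
  0 < n -> 0 <= U -> U <= n * T -> g \is Num.real -> g < 1 ->
  0 <= T - g / n * U /\ (0 < T -> 0 < T - g / n * U).
Proof.
move=> n0 U0 UT gr g1.
have UnT : U / n <= T by rewrite ler_pdivrMr // mulrC.
have Un0 : 0 <= U / n by rewrite divr_ge0 // ltW.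
have T0 : 0 <= T := le_trans Un0 UnT.
have -> : g / n * U = g * (U / n) by rewrite mulrAC mulrA.
have [g0|g0] := real_leP (real0 R) gr.
  have h : g * (U / n) <= g * T by rewrite ler_wpM2l.
  have e : 0 <= T - g * T by rewrite -{1}(mul1r T) -mulrBl mulr_ge0 // subr_ge0 ltW.
  split; first by apply: le_trans e _; rewrite lerB.
  move=> Tp; apply: lt_le_trans (_ : 0 < T - g * T) _; last by rewrite lerB.
  by rewrite -{1}(mul1r T) -mulrBl mulr_gt0 // subr_gt0.
have h : g * (U / n) <= 0 by rewrite nmulr_rle0.
have e : T <= T - g * (U / n) by rewrite -{1}(subr0 T) lerB.
by split; [apply: le_trans e | move=> Tp; apply: lt_le_trans e].
Qed.
Search (_ ^+ _ <= _ ^+ _) "ler".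

Theorem proposition6p4 (C : numClosedFieldType) (N : nat) (V : finType)
    (adj : rel V) (phi : V -> C) (gamma : V -> C) (x y z : V) :
  (1 <= N)%N ->
  simple_graph adj ->
  (forall v, gamma v \is Num.real) ->
  (forall v, eq1_at adj phi gamma v) ->
  adj x y -> adj x z -> adj y z ->
  gamma x < 1 -> gamma y < 1 -> gamma z < 1 ->
  edge_len adj N phi gamma y z <= edge_len adj N phi gamma x y + edge_len adj N phi gamma x z
  /\ ((exists w, adj x w /\ phi w <> phi x) ->
      edge_len adj N phi gamma y z < edge_len adj N phi gamma x y + edge_len adj N phi gamma x z).
Proof.
move=> N1 _ gr _ axy _ _ gx _ _.
have -> : edge_len adj N phi gamma x y + edge_len adj N phi gamma x z
   = edge_len adj N phi gamma y z + median_len adj N phi gamma x.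
  by rewrite /edge_len; field.
rewrite !lerDl !ltrDl /median_len sqrtC_ge0 sqrtC_gt0.
set n := (deg adj x)%:R : C.
have np : 0 < n.
  rewrite /n ltr0n /deg lt0n; apply/eqP => /eqP; rewrite cards_eq0 => /eqP e.
  by move: (in_set0 y); rewrite -e inE axy.
set T := \sum_(w | adj x w) `|phi w - phi x| ^+ 2.
set U := `|\sum_(w | adj x w) (phi w - phi x)| ^+ 2.
have UT : U <= n * T.
  apply: (le_trans (y := (\sum_(w | adj x w) `|phi w - phi x|) ^+ 2)).
    by rewrite lerXn2r ?nnegrE ?sumr_ge0 // ler_norm_sum.
  have := @cs_real C V (adj x) _ (fun w => normr_real (phi w - phi x)).
  by rewrite /n /deg cardsE.
have [K1 K2] := @key C _ _ _ _ np (exprn_ge0 2 (normr_ge0 _)) UT (gr x) gx.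
have Ap : 0 < (N%:R + (1 - N%:R) * gamma x) / (n * (1 - gamma x)).
  case: N N1 => // N' _.
  have -> : (N'.+1%:R + (1 - N'.+1%:R) * gamma x) = 1 + N'%:R * (1 - gamma x).
    by rewrite -natr1; ring.
  by rewrite divr_gt0 // ?mulr_gt0 ?subr_gt0 // ltr_wpDr // mulr_ge0 // subr_ge0 ltW.
rewrite /rho -/n -/T -/U.
split; first by apply: mulr_ge0; [exact: ltW | apply: mulr_ge0; rewrite ?invr_ge0].
case=> w [aw pw].
apply: mulr_gt0 => //; apply: mulr_gt0; first by rewrite invr_gt0.
apply: K2.
rewrite /T (bigD1 w) //=.
apply: (lt_le_trans (y := `|phi w - phi x| ^+ 2)).
  by apply: exprn_gt0; rewrite normr_gt0 subr_eq0; apply/eqP.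
rewrite lerDl; apply: sumr_ge0 => i _; exact: exprn_ge0.
Qed.
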